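(* Fix parameters $D_0>0$, $\alpha>0$, $p^a\ge 0$ and a weight $\gamma\in(0,1)$. For prices $p^s,p^c,p^d\in\mathbb{R}$ let $d(p^s,p^c)=\max\{D_0-\alpha(p^s+p^c),0\}$, $U_{ISP}=d(p^s,p^c)\,(p^s+p^d)$ and $U_{CP}=d(p^s,p^c)\,(p^c+p^a-p^d)$. In the ex ante regulation game, the following holds. (a) For every $p^d\in\mathbb{R}$, the simultaneous pricing game (ISP chooses $p^s$, CP chooses $p^c$) has exactly one pure-strategy Nash equilibrium with strictly positive demand, namely $$p^s=\frac{D_0+\alpha p^a}{3\alpha}-p^d,\qquad p^c=\frac{D_0-2\alpha p^a}{3\alpha}+p^d .$$ At this equilibrium: - the net internaut price is $p^s+p^c=\frac{2D_0-\alpha p^a}{3\alpha}$, independent of $p^d$; - the demand is $\frac{D_0+\alpha p^a}{3}>0$; - $U_{ISP}=U_{CP}=\frac{(D_0+\alpha p^a)^2}{9\alpha}$. Consequently $U_{ISP}^{\gamma}U_{CP}^{1-\gamma}$ at this equilibrium does not depend on $p^d$, so every $p^d\in\mathbb{R}$ is an optimal choice of the regulator. The equilibrium is therefore unique up to a free choice of $p^d$, and a payment $p^d$ lowers $p^s$ and raises $p^c$ by exactly $p^d$. (b) For each fixed $p^d$, a profile $(p^s,p^c)$ is a pure-strategy Nash equilibrium of the pricing game with zero demand if and only if $$p^s\ge D_0/\alpha+p^a-p^d\quad\text{and}\quad p^c\ge D_0/\alpha+p^d.$$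
   Context: Single ISP, single content provider (CP) model. - $p^s$ is the price per unit demand paid by internauts to the ISP, and $p^c$ the price per unit demand paid by internauts to the CP. Either may be negative. - $p^d$ is the payment per unit demand from the CP to the ISP, and may be negative. - $p^a\ge0$ is the advertising revenue per unit demand earned by the CP. Ex ante regulation game: 1. A regulator first sets $p^d$. 2. Then the ISP and the CP simultaneously choose $p^s$ and $p^c$, with payoffs $U_{ISP}$ and $U_{CP}$. 3. Internauts generate demand $d(p^s,p^c)$. The regulator chooses $p^d$ to maximize $U_{ISP}^{\gamma}\times U_{CP}^{1-\gamma}$, where $U_{ISP}$ and $U_{CP}$ are evaluated at the pure-strategy Nash equilibrium of the pricing game induced by that $p^d$. *)

(* Defs.v *)
From Stdlib Require Import Reals Lra.
Open Scope R_scope.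

Definition demand (D0 alpha ps pc : R) : R := Rmax (D0 - alpha * (ps + pc)) 0.

Definition U_ISP (D0 alpha pd ps pc : R) : R := demand D0 alpha ps pc * (ps + pd).

Definition U_CP (D0 alpha pa pd ps pc : R) : R :=
  demand D0 alpha ps pc * (pc + pa - pd).

Definition NashEq (D0 alpha pa pd ps pc : R) : Prop :=
  (forall ps', U_ISP D0 alpha pd ps' pc <= U_ISP D0 alpha pd ps pc) /\
  (forall pc', U_CP D0 alpha pa pd ps pc' <= U_CP D0 alpha pa pd ps pc).

(* Regulator's objective U_ISP^gamma * U_CP^(1-gamma) at a profile (ps,pc)
   (Rpower x y = exp (y ln x), meaningful for positive utilities). *)
Definition NashProduct (D0 alpha pa gamma pd ps pc : R) : R :=
  Rpower (U_ISP D0 alpha pd ps pc) gamma *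
  Rpower (U_CP D0 alpha pa pd ps pc) (1 - gamma).

(* Main.v *)
Require Import Defs.
From Stdlib Require Import Reals Lra Psatz.
Open Scope R_scope.

Lemma dem_pos D0 a ps pc : 0 <= D0 - a*(ps+pc) -> demand D0 a ps pc = D0 - a*(ps+pc).
Proof. intros; unfold demand; rewrite Rmax_left; lra. Qed.
Lemma dem_neg D0 a ps pc : D0 - a*(ps+pc) <= 0 -> demand D0 a ps pc = 0.
Proof. intros; unfold demand; rewrite Rmax_right; lra. Qed.
Lemma dem_case D0 a ps pc :
  (0 <= D0 - a*(ps+pc) /\ demand D0 a ps pc = D0 - a*(ps+pc)) \/
  (D0 - a*(ps+pc) <= 0 /\ demand D0 a ps pc = 0).
Proof. destruct (Rle_dec 0 (D0 - a*(ps+pc))).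
 left; split; [lra| apply dem_pos; lra]. right; split; [lra| apply dem_neg; lra]. Qed.

Lemma isp_best D0 a pd ps pc ps' : 0 < a -> 2*a*(ps+pd) = D0 - a*pc + a*pd ->
  U_ISP D0 a pd ps' pc <= U_ISP D0 a pd ps pc.
Proof. intros Ha E. unfold U_ISP.
 destruct (dem_case D0 a ps pc) as [[H3 H4]|[H3 H4]]; rewrite H4;
 destruct (dem_case D0 a ps' pc) as [[H1 H2]|[H1 H2]]; rewrite H2;
 try nra; try (assert (ps' + pd <= 0) by nra; nra);
 pose proof (Rle_0_sqr (ps - ps')); unfold Rsqr in *; nra. Qed.

Lemma cp_best D0 a pa pd ps pc pc' : 0 < a -> 2*a*(pc+pa-pd) = D0 - a*ps - a*pd + a*pa ->
  U_CP D0 a pa pd ps pc' <= U_CP D0 a pa pd ps pc.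
Proof. intros Ha E. unfold U_CP.
 destruct (dem_case D0 a ps pc) as [[H3 H4]|[H3 H4]]; rewrite H4;
 destruct (dem_case D0 a ps pc') as [[H1 H2]|[H1 H2]]; rewrite H2;
 try nra; try (assert (pc' + pa - pd <= 0) by nra; nra);
 pose proof (Rle_0_sqr (pc - pc')); unfold Rsqr in *; nra. Qed.

Lemma isp_foc D0 a pd ps pc : 0 < a -> (forall ps', U_ISP D0 a pd ps' pc <= U_ISP D0 a pd ps pc) ->
  0 < demand D0 a ps pc -> 2*a*(ps+pd) = D0 - a*pc + a*pd.
Proof. intros Ha H Hd. unfold U_ISP in H.
 destruct (dem_case D0 a ps pc) as [[H1 H2]|[H1 H2]]; [|lra].
 rewrite H2 in H, Hd.
 set (ps1 := (D0 - a*pc + a)/a). assert (E1: a*ps1 = D0 - a*pc + a) by (unfold ps1; field; lra).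
 pose proof (H ps1) as K1. rewrite dem_neg in K1 by nra.
 set (ps2 := (D0 - a*pc + a*pd)/(2*a) - pd). assert (E2: 2*a*(ps2+pd) = D0 - a*pc + a*pd) by (unfold ps2; field; lra).
 pose proof (H ps2) as K2. rewrite dem_pos in K2 by nra.
 assert (ps+pd >= 0) by nra.
 assert (a*((ps2 - ps)*(ps2-ps)) <= 0) by nra.
 assert ((ps2 - ps)*(ps2-ps) <= 0).
 { destruct (Rle_dec ((ps2 - ps)*(ps2-ps)) 0); auto. nra. }
 assert (ps2 = ps) by nra. subst ps2. nra. Qed.

Lemma cp_foc D0 a pa pd ps pc : 0 < a -> (forall pc', U_CP D0 a pa pd ps pc' <= U_CP D0 a pa pd ps pc) ->
  0 < demand D0 a ps pc -> 2*a*(pc+pa-pd) = D0 - a*ps - a*pd + a*pa.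
Proof. intros Ha H Hd. unfold U_CP in H.
 destruct (dem_case D0 a ps pc) as [[H1 H2]|[H1 H2]]; [|lra].
 rewrite H2 in H, Hd.
 set (pc1 := (D0 - a*ps + a)/a). assert (E1: a*pc1 = D0 - a*ps + a) by (unfold pc1; field; lra).
 pose proof (H pc1) as K1. rewrite dem_neg in K1 by nra.
 set (pc2 := (D0 - a*ps - a*pd + a*pa)/(2*a) - pa + pd).
 assert (E2: 2*a*(pc2+pa-pd) = D0 - a*ps - a*pd + a*pa) by (unfold pc2; field; lra).
 pose proof (H pc2) as K2. rewrite dem_pos in K2 by nra.
 assert (pc+pa-pd >= 0) by nra.
 assert (a*((pc2 - pc)*(pc2-pc)) <= 0) by nra.
 assert ((pc2 - pc)*(pc2-pc) <= 0).
 { destruct (Rle_dec ((pc2 - pc)*(pc2-pc)) 0); auto. nra. }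
 assert (pc2 = pc) by nra. subst pc2. nra. Qed.

Lemma isp_zero D0 a pd ps pc : 0 < a -> (forall ps', U_ISP D0 a pd ps' pc <= U_ISP D0 a pd ps pc) ->
  demand D0 a ps pc = 0 -> D0 - a*pc + a*pd <= 0.
Proof. intros Ha H Hd. unfold U_ISP in H. rewrite Hd in H.
 destruct (Rle_dec (D0 - a*pc + a*pd) 0); auto. exfalso.
 set (ps2 := (D0 - a*pc + a*pd)/(2*a) - pd). assert (E2: 2*a*(ps2+pd) = D0 - a*pc + a*pd) by (unfold ps2; field; lra).
 pose proof (H ps2) as K2. rewrite dem_pos in K2 by nra. nra. Qed.

Lemma cp_zero D0 a pa pd ps pc : 0 < a -> (forall pc', U_CP D0 a pa pd ps pc' <= U_CP D0 a pa pd ps pc) ->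
  demand D0 a ps pc = 0 -> D0 - a*ps - a*pd + a*pa <= 0.
Proof. intros Ha H Hd. unfold U_CP in H. rewrite Hd in H.
 destruct (Rle_dec (D0 - a*ps - a*pd + a*pa) 0); auto. exfalso.
 set (pc2 := (D0 - a*ps - a*pd + a*pa)/(2*a) - pa + pd).
 assert (E2: 2*a*(pc2+pa-pd) = D0 - a*ps - a*pd + a*pa) by (unfold pc2; field; lra).
 pose proof (H pc2) as K2. rewrite dem_pos in K2 by nra. nra. Qed.
Theorem theorem1 (D0 alpha pa gamma : R) :
  0 < D0 -> 0 < alpha -> 0 <= pa -> 0 < gamma < 1 ->
  (* (a) unique NE with positive demand, with explicit prices *)
  (forall pd ps pc,
     (NashEq D0 alpha pa pd ps pc /\ 0 < demand D0 alpha ps pc) <->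
     (ps = (D0 + alpha * pa) / (3 * alpha) - pd /\
      pc = (D0 - 2 * alpha * pa) / (3 * alpha) + pd)) /\
  (* properties of that equilibrium *)
  (forall pd ps pc,
     NashEq D0 alpha pa pd ps pc -> 0 < demand D0 alpha ps pc ->
     ps + pc = (2 * D0 - alpha * pa) / (3 * alpha) /\
     demand D0 alpha ps pc = (D0 + alpha * pa) / 3 /\
     0 < demand D0 alpha ps pc /\
     U_ISP D0 alpha pd ps pc = (D0 + alpha * pa) ^ 2 / (9 * alpha) /\
     U_CP D0 alpha pa pd ps pc = (D0 + alpha * pa) ^ 2 / (9 * alpha) /\
     NashProduct D0 alpha pa gamma pd ps pc = (D0 + alpha * pa) ^ 2 / (9 * alpha)) /\
  (* every pd is an optimal choice of the regulator *)
  (forall pd ps pc pd' ps' pc',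
     NashEq D0 alpha pa pd ps pc -> 0 < demand D0 alpha ps pc ->
     NashEq D0 alpha pa pd' ps' pc' -> 0 < demand D0 alpha ps' pc' ->
     NashProduct D0 alpha pa gamma pd' ps' pc' <= NashProduct D0 alpha pa gamma pd ps pc) /\
  (* (b) zero-demand equilibria *)
  (forall pd ps pc,
     (NashEq D0 alpha pa pd ps pc /\ demand D0 alpha ps pc = 0) <->
     (ps >= D0 / alpha + pa - pd /\ pc >= D0 / alpha + pd)).
Proof.
intros HD Ha Hpa Hg.
assert (Hmain : forall pd ps pc,
     (NashEq D0 alpha pa pd ps pc /\ 0 < demand D0 alpha ps pc) <->
     (ps = (D0 + alpha * pa) / (3 * alpha) - pd /\
      pc = (D0 - 2 * alpha * pa) / (3 * alpha) + pd)).
{ intros pd ps pc. split.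
  - intros [[N1 N2] Hd].
    pose proof (isp_foc _ _ _ _ _ Ha N1 Hd) as F1.
    pose proof (cp_foc _ _ _ _ _ _ Ha N2 Hd) as F2.
    split.
    + apply (Rmult_eq_reg_l (3*alpha)); [|lra].
      unfold Rdiv. rewrite Rmult_minus_distr_l.
      replace (3 * alpha * ((D0 + alpha * pa) * / (3 * alpha))) with (D0 + alpha*pa) by (field; lra). nra.
    + apply (Rmult_eq_reg_l (3*alpha)); [|lra].
      unfold Rdiv. rewrite Rmult_plus_distr_l.
      replace (3 * alpha * ((D0 - 2 * alpha * pa) * / (3 * alpha))) with (D0 - 2*alpha*pa) by (field; lra). nra.
  - intros [E1 E2].
    assert (F1 : 3*alpha*(ps+pd) = D0 + alpha*pa) by (rewrite E1; field; lra).
    assert (F2 : 3*alpha*(pc-pd) = D0 - 2*alpha*pa) by (rewrite E2; field; lra).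
    split; [split|].
    + intro ps'. apply isp_best; lra.
    + intro pc'. apply cp_best; lra.
    + rewrite dem_pos by nra. nra. }
assert (Hprop : forall pd ps pc,
     NashEq D0 alpha pa pd ps pc -> 0 < demand D0 alpha ps pc ->
     ps + pc = (2 * D0 - alpha * pa) / (3 * alpha) /\
     demand D0 alpha ps pc = (D0 + alpha * pa) / 3 /\
     0 < demand D0 alpha ps pc /\
     U_ISP D0 alpha pd ps pc = (D0 + alpha * pa) ^ 2 / (9 * alpha) /\
     U_CP D0 alpha pa pd ps pc = (D0 + alpha * pa) ^ 2 / (9 * alpha) /\
     NashProduct D0 alpha pa gamma pd ps pc = (D0 + alpha * pa) ^ 2 / (9 * alpha)).
{ intros pd ps pc N Hd.
  destruct (proj1 (Hmain pd ps pc) (conj N Hd)) as [E1 E2].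
  assert (Edem : demand D0 alpha ps pc = (D0 + alpha * pa) / 3).
  { assert (S : alpha*(ps+pc) = (2*D0 - alpha*pa)/3) by (rewrite E1, E2; field; lra).
    rewrite dem_pos; rewrite S; [field | nra]. }
  assert (EU1 : U_ISP D0 alpha pd ps pc = (D0 + alpha * pa) ^ 2 / (9 * alpha)).
  { unfold U_ISP. rewrite Edem, E1. field; lra. }
  assert (EU2 : U_CP D0 alpha pa pd ps pc = (D0 + alpha * pa) ^ 2 / (9 * alpha)).
  { unfold U_CP. rewrite Edem, E2. field; lra. }
  assert (Hpos : 0 < (D0 + alpha * pa) ^ 2 / (9 * alpha)).
  { apply Rdiv_lt_0_compat; [|lra]. apply pow_lt. nra. }
  repeat split; auto.
  - rewrite E1, E2. field; lra.
  - unfold NashProduct. rewrite EU1, EU2, <- Rpower_plus.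
    replace (gamma + (1 - gamma)) with 1 by ring. apply Rpower_1; auto. }
split; [exact Hmain|]. split; [exact Hprop|]. split.
{ intros pd ps pc pd' ps' pc' N Hd N' Hd'.
  destruct (Hprop _ _ _ N Hd) as (_&_&_&_&_&P1).
  destruct (Hprop _ _ _ N' Hd') as (_&_&_&_&_&P2).
  rewrite P1, P2. lra. }
intros pd ps pc. split.
- intros [[N1 N2] Hd].
  pose proof (isp_zero _ _ _ _ _ Ha N1 Hd) as Z1.
  pose proof (cp_zero _ _ _ _ _ _ Ha N2 Hd) as Z2.
  split; apply Rle_ge.
  + apply (Rmult_le_reg_l alpha); [lra|].
    replace (alpha * (D0 / alpha + pa - pd)) with (D0 + alpha*pa - alpha*pd) by (field; lra). lra.
  + apply (Rmult_le_reg_l alpha); [lra|].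
    replace (alpha * (D0 / alpha + pd)) with (D0 + alpha*pd) by (field; lra). lra.
- intros [G1 G2].
  assert (Q : alpha * (D0/alpha) = D0) by (field; lra).
  assert (H1 : alpha * ps >= D0 + alpha*pa - alpha*pd).
  { apply Rle_ge. replace (D0 + alpha*pa - alpha*pd) with (alpha * (D0/alpha + pa - pd)) by (field; lra).
    apply Rmult_le_compat_l; lra. }
  assert (H2 : alpha * pc >= D0 + alpha*pd).
  { apply Rle_ge. replace (D0 + alpha*pd) with (alpha * (D0/alpha + pd)) by (field; lra).
    apply Rmult_le_compat_l; lra. }
  assert (Hd : demand D0 alpha ps pc = 0) by (apply dem_neg; nra).
  split; [split|exact Hd].
  + intro ps'. unfold U_ISP. rewrite Hd.
    destruct (dem_case D0 alpha ps' pc) as [[K1 K2]|[K1 K2]]; rewrite K2; [|lra].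
    assert (alpha*(ps'+pd) <= 0) by nra. nra.
  + intro pc'. unfold U_CP. rewrite Hd.
    destruct (dem_case D0 alpha ps pc') as [[K1 K2]|[K1 K2]]; rewrite K2; [|lra].
    assert (alpha*(pc'+pa-pd) <= 0) by nra. nra.
Qed.
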